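(* Assume the defocusing case $\mu_1\le\dots\le\mu_n<0$ (with $n\ge3$). Then there are at most finitely many possible bifurcation parameters, i.e. the set of $\beta\in(-\infty,\mu_1)\cup(\mu_n,\bar\beta)$ such that $f(\beta)=\lambda_k$ for some $k\in\mathbb N$ is finite.
   Context: Let $\Omega\subset\mathbb R^N$ ($N\le3$) be a smooth bounded domain whose principal Dirichlet eigenvalue of $-\Delta$ is less than $1$, and $\omega\in H_0^1(\Omega)$ the unique positive solution of $-\Delta\omega-\omega=-\omega^3$. Let $-1=\lambda_1<\lambda_2<\cdots\to\infty$ be the distinct eigenvalues of $-\Delta\psi-\psi=\lambda\omega^2\psi$, $\psi\in H_0^1(\Omega)$. Let $g(\beta)=1+\beta\sum_{j=1}^n\frac1{\mu_j-\beta}$, $f(\beta)=-1-\frac2{g(\beta)}$, and $\bar\beta$ the unique zero of $g$ in $(\mu_n,\infty)$. *)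

(* Defs.v *)
From HB Require Import structures.
From mathcomp Require Import all_boot all_order all_algebra.
From mathcomp Require Import all_classical all_reals all_analysis.
Set Implicit Arguments. Unset Strict Implicit. Unset Printing Implicit Defensive.
Import Order.TTheory GRing.Theory Num.Theory.
Local Open Scope ring_scope.

(* mu_1,...,mu_n are mu 1, ..., mu n (mu : nat -> R). *)

Definition bif_g (R : realType) (n : nat) (mu : nat -> R) (b : R) : R :=
  1 + b * \sum_(1 <= j < n.+1) (mu j - b)^-1.

Definition bif_f (R : realType) (n : nat) (mu : nat -> R) (b : R) : R :=
  -1 - 2 / bif_g n mu b.

(* Main.v *)
Require Import Defs.
From HB Require Import structures.
From mathcomp Require Import all_boot all_order all_algebra.
From mathcomp Require Import all_classical all_reals all_analysis.
From mathcomp Require Import ring lra.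
Import Order.TTheory GRing.Theory Num.Theory.
Local Open Scope ring_scope.
Local Open Scope classical_set_scope.

Lemma g_sum (R : realType) (n : nat) (mu : nat -> R) (b : R) :
  bif_g n mu b = 1 + \sum_(1 <= j < n.+1) b / (mu j - b).
Proof. by rewrite /bif_g mulr_sumr. Qed.

Lemma term_dec (R : realType) (m b c : R) : m < 0 -> b < c ->
  0 < (m - b) * (m - c) -> c / (m - c) < b / (m - b).
Proof.
move=> hm hbc hp.
have hb : m - b != 0 by apply/eqP=> h; move: hp; rewrite h mul0r ltxx.
have hc : m - c != 0 by apply/eqP=> h; move: hp; rewrite h mulr0 ltxx.
rewrite (_ : c / (m - c) = (c * (m - b)) * ((m - b) * (m - c))^-1); last by field; rewrite hb hc.
rewrite (_ : b / (m - b) = (b * (m - c)) * ((m - b) * (m - c))^-1); last by field; rewrite hb hc.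
rewrite ltr_pM2r ?invr_gt0 //.
nra.
Qed.

Theorem lemma3p4 (R : realType) (n : nat) (mu : nat -> R) (lam : nat -> R)
    (bbar : R)
    (hn : (3 <= n)%N)
    (hmu_sorted : forall i j : nat, (1 <= i)%N -> (i <= j)%N -> (j <= n)%N ->
       mu i <= mu j)
    (hmu_neg : mu n < 0)
    (hlam1 : lam 1%N = -1)
    (hlam_incr : forall k : nat, (1 <= k)%N -> lam k < lam k.+1)
    (hlam_inf : lam @ \oo --> +oo)
    (hbbar_gt : mu n < bbar)
    (hbbar_zero : bif_g n mu bbar = 0)
    (hbbar_uniq : forall b : R, mu n < b -> bif_g n mu b = 0 -> b = bbar) :
  finite_set [set b : R | (b < mu 1%N \/ (mu n < b /\ b < bbar)) /\
                          exists k : nat, (1 <= k)%N /\ bif_f n mu b = lam k].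
Proof.
have hrange : forall j, (1 <= j < n.+1)%N -> mu 1%N <= mu j /\ mu j <= mu n /\ mu j < 0.
  move=> j /andP [h1 h2]; rewrite ltnS in h2.
  have a := hmu_sorted 1%N j isT h1 h2.
  have c := hmu_sorted j n h1 h2 (leqnn n).
  split => //; split => //; exact: le_lt_trans c hmu_neg.
have hn1 : (1 < n.+1)%N by rewrite ltnS; apply: leq_trans hn.
have dec1 : forall b c, b < c -> c < mu 1%N -> bif_g n mu c < bif_g n mu b.
  move=> b c hbc hc; rewrite !g_sum ltrD2l; apply: ltr_sum_nat => // j hj.
  have [h1 [h2 h3]] := hrange j hj.
  apply: term_dec => //; nra.
have dec2 : forall b c, mu n < b -> b < c -> bif_g n mu c < bif_g n mu b.
  move=> b c hb hbc; rewrite !g_sum ltrD2l; apply: ltr_sum_nat => // j hj.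
  have [h1 [h2 h3]] := hrange j hj.
  apply: term_dec => //; nra.
have glt : forall b, b < mu 1%N -> bif_g n mu b < -2.
  move=> b hb; rewrite g_sum.
  have : \sum_(1 <= j < n.+1) b / (mu j - b) < \sum_(1 <= j < n.+1) (-1 : R).
    apply: ltr_sum_nat => // j hj.
    have [h1 [h2 h3]] := hrange j hj.
    have hd : 0 < mu j - b by lra.
    rewrite ltr_pdivrMr //; lra.
  rewrite sumr_const_nat subn1 /= => h.
  have : (-1 : R) *+ n <= -3.
    by rewrite mulNrn lerN2 ler_nat.
  lra.
have lam_ge : forall k, (1 <= k)%N -> -1 <= lam k.
  case => // m _; elim: m => [|m IH]; first by rewrite hlam1.
  apply: (le_trans IH); apply: ltW; exact: hlam_incr.
have [N _ HN] : \forall k \near \oo, 0 <= lam k.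
  exact: (cvgryPge lam).1 hlam_inf 0.
pose P k := [set b : R | b < mu 1%N /\ bif_f n mu b = lam k].
pose h k := xget 0 (P k).
apply: (@sub_finite_set _ _ [set h k | k in `I_N]); last exact/finite_image/finite_II.
move=> b [[hb|[hb1 hb2]] [k [hk hfb]]]; last first.
  have : 0 < bif_g n mu b by rewrite -hbbar_zero; exact: dec2.
  move=> hg; have := lam_ge k hk; rewrite -hfb /bif_f.
  have : 0 < 2 / bif_g n mu b by rewrite divr_gt0.
  lra.
have hg := glt b hb.
have hfneg : bif_f n mu b < 0.
  rewrite /bif_f.
  have hgi : (bif_g n mu b)^-1 < 0 by rewrite invr_lt0; lra.
  have e1 : (bif_g n mu b)^-1 * bif_g n mu b = 1.
    by rewrite mulVf //; apply/eqP => h0; lra.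
  have : 0 < (bif_g n mu b)^-1 * (bif_g n mu b + 2) by rewrite nmulr_rgt0 //; lra.
  rewrite mulrDr e1; lra.
have kN : (k < N)%N.
  rewrite ltnNge; apply/negP => hkN.
  have := HN k hkN; rewrite /= -hfb; lra.
exists k => //.
have Pb : P k b by split.
have [hh1 hh2] : P k (h k) := xgetPex 0 (ex_intro _ b Pb).
have gne : forall x, x < mu 1%N -> bif_g n mu x != 0.
  by move=> x hx; apply/eqP => h0; have := glt x hx; lra.
have feq : bif_g n mu (h k) = bif_g n mu b.
  move: hh2; rewrite -hfb /bif_f => e.
  have : (bif_g n mu (h k))^-1 = (bif_g n mu b)^-1 by lra.
  exact: invr_inj.
case: (ltgtP (h k) b) => // hc.
  by have := dec1 _ _ hc hb; rewrite feq ltxx.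
by have := dec1 _ _ hc hh1; rewrite feq ltxx.
Qed.
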